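(* Let $f:\{0,1\}^n\to\{0,1\}$ be an arbitrary symmetric Boolean function and let $\operatorname{alt}(f)$ be its alternation number. Then $\mathsf N(f)\ge\frac{\operatorname{alt}(f)}{2}$.
   Context: $\mathsf N(f)$ is the minimum degree of a real polynomial $p$ with $|p(x)|\le1/3$ whenever $f(x)=0$ and $|p(x)|\ge1$ whenever $f(x)=1$. $f$ is symmetric if its value depends only on the Hamming weight of the input. A monotone path is a sequence in $\{0,1\}^n$ where each next point is obtained by changing one coordinate from $0$ to $1$; its alternation number is the number of consecutive pairs on which $f$ changes value; $\operatorname{alt}(f)$ is the maximum alternation number over monotone paths from $0^n$ to $1^n$. *)

(* Defs.v *)
From Stdlib Require Import Reals.
From HB Require Import structures.
From mathcomp Require Import all_boot all_order all_algebra.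
From mathcomp Require Import Rstruct.
From mathcomp Require Import mpoly.
Set Implicit Arguments. Unset Strict Implicit. Unset Printing Implicit Defensive.
Import Order.TTheory GRing.Theory Num.Theory.
Local Open Scope ring_scope.

Definition cube (n : nat) := {ffun 'I_n -> bool}.

Definition boolfun (n : nat) := cube n -> bool.

Definition hweight n (x : cube n) : nat := #|[set i | x i]|.

Definition symmetric_fun n (f : boolfun n) : Prop :=
  forall x y : cube n, hweight x = hweight y -> f x = f y.

Definition step n (x y : cube n) : bool :=
  [exists i, [&& ~~ x i, y i & [forall j, (j != i) ==> (y j == x j)]]].

Definition zero_pt n : cube n := [ffun _ => false].
Definition one_pt n : cube n := [ffun _ => true].

Definition monotone_path_01 n (x0 : cube n) (s : seq (cube n)) : bool :=
  [&& x0 == zero_pt n, last x0 s == one_pt n & path (@step n) x0 s].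

Definition alt_number n (f : boolfun n) (x0 : cube n) (s : seq (cube n)) : nat :=
  count id (pairmap (fun x y => f x != f y) x0 s).

Definition eval_cube n (p : {mpoly R[n]}) (x : cube n) : R :=
  p.@[fun i => (x i)%:R].

(* Total degree of a polynomial (msize p = 1 + degree, 0 for p = 0). *)
Definition mpoly_deg n (p : {mpoly R[n]}) : nat := (msize p).-1.

(* p "one-sided approximates" f in the sense of N(f):
   |p(x)| <= 1/3 when f(x) = 0 and |p(x)| >= 1 when f(x) = 1. *)
Definition N_rep n (f : boolfun n) (p : {mpoly R[n]}) : Prop :=
  forall x : cube n,
    (f x = false -> `|eval_cube p x| <= 3^-1) /\
    (f x = true -> 1 <= `|eval_cube p x|).

(* Main.v *)
Require Import Defs.
From Stdlib Require Import Reals.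
From HB Require Import structures.
From mathcomp Require Import all_boot all_order all_algebra.
From mathcomp Require Import Rstruct.
From mathcomp Require Import mpoly.
From mathcomp Require Import polyrcf.
From mathcomp Require Import zify ring lra.
Set Implicit Arguments. Unset Strict Implicit. Unset Printing Implicit Defensive.
Import Order.TTheory GRing.Theory Num.Theory.
Local Open Scope ring_scope.
Lemma sign_changes (g : {poly R}) (b : nat -> bool) (N : nat) :
  (forall j, (j <= N)%N -> if b j then 0 < g.[j%:R] else g.[j%:R] < 0) ->
  (count (fun j => b j != b j.+1) (iota 0 N) <= (size g).-1)%N.
Proof.
move=> Hs.
have gn0 : g != 0.
  apply/eqP => g0; have := Hs 0%N (leq0n _); rewrite g0 horner0.
  by case: (b 0%N); rewrite ltxx.
have H : forall j, {r : R | (j < N)%N -> b j != b j.+1 ->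
                         j%:R < r < j.+1%:R /\ root g r}.
  move=> j; case: (boolP ((j < N)%N && (b j != b j.+1))); last first.
    by move=> Hn; exists 0 => jN bj; rewrite jN bj in Hn.
  move=> /andP[jN bj].
  have hm : g.[j%:R] * g.[j.+1%:R] < 0.
    have h1 := Hs j (ltnW jN); have h2 := Hs j.+1 jN.
    move: bj h1 h2; case: (b j); case: (b j.+1) => //= _ h1 h2.
      by rewrite pmulr_rlt0.
    by rewrite nmulr_rlt0.
  have le : j%:R <= j.+1%:R :> R by rewrite ler_nat.
  have [r rin rr] := poly_ivtoo le hm.
  by exists r => _ _; split => //.
pose rs := [seq sval (H j) | j <- iota 0 N & b j != b j.+1].
have := @max_poly_roots _ g rs gn0.
have -> : size rs = count (fun j => b j != b j.+1) (iota 0 N).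
  by rewrite size_map size_filter.
move=> Hm.
have: (count (fun j => b j != b j.+1) (iota 0 N) < size g)%N.
  apply: Hm.
    apply/allP => r /mapP [j]; rewrite mem_filter mem_iota /= => /andP [bj jN] ->.
    by case: (svalP (H j) jN bj).
  rewrite map_inj_in_uniq; first by rewrite filter_uniq // iota_uniq.
  move=> i j; rewrite !mem_filter !mem_iota /= => /andP[bi iN] /andP[bj jN] e.
  case: (svalP (H i) iN bi) => /andP [h1 h2] _.
  case: (svalP (H j) jN bj) => /andP [h3 h4] _.
  rewrite e in h1 h2.
  have a1 : (i%:R < j.+1%:R :> R) by apply: lt_trans h1 h4.
  have a2 : (j%:R < i.+1%:R :> R) by apply: lt_trans h3 h2.
  rewrite (ltr_nat R) in a1; rewrite (ltr_nat R) in a2.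
  apply/eqP; rewrite eqn_leq -ltnS a1 /= -ltnS a2 //.
move=> h; rewrite -ltnS; apply: leq_trans h _.
by case: (size g).
Qed.
Lemma ffact_split_id n s k : (s <= k)%N -> (k <= n)%N ->
  ((n - s) ^_ (k - s) * n ^_ s = n ^_ k)%N.
Proof.
move=> sk kn.
have f0 : (0 < (n - k)`!)%N by apply: fact_gt0.
apply/eqP; rewrite -(eqn_pmul2r f0).
rewrite mulnAC.
have e1 : (n - s - (k - s) = n - k)%N by lia.
rewrite -e1 ffact_fact; last by lia.
rewrite e1 mulnC ffact_fact; last by lia.
by rewrite ffact_fact.
Qed.

Lemma bin_id n s k : (s <= k)%N ->
  ('C(n - s, k - s) * n ^_ s = 'C(n, k) * k ^_ s)%N.
Proof.
move=> sk.
case: (ltnP n k) => kn.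
  rewrite (bin_small kn) mul0n.
  case: (ltnP n s) => ns; first by rewrite ffact_small // muln0.
  by rewrite (@bin_small (n - s)) //; lia.
have f0 : (0 < (k - s)`!)%N by apply: fact_gt0.
apply/eqP; rewrite -(eqn_pmul2r f0).
rewrite mulnAC bin_ffact -mulnA ffact_fact // bin_ffact.
by rewrite ffact_split_id.
Qed.

Lemma count_sets n (S : {set 'I_n}) k :
  (#|[set A : {set 'I_n} | (#|A| == k) && (S \subset A)]| * n ^_ #|S| =
   'C(n, k) * k ^_ #|S|)%N.
Proof.
case: (ltnP k #|S|) => hk.
  rewrite (ffact_small hk) muln0.
  suff -> : [set A : {set 'I_n} | (#|A| == k) && (S \subset A)] = set0.
    by rewrite cards0.
  apply/setP => A; rewrite !inE; apply/negbTE/andP => [[/eqP eA sub]].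
  by have := subset_leq_card sub; lia.
rewrite -bin_id //.
congr (_ * _)%N.
have -> : [set A : {set 'I_n} | (#|A| == k) && (S \subset A)] =
   (fun B => B :|: S) @: [set B : {set 'I_n} | B \subset ~: S & #|B| == (k - #|S|)%N].
  apply/setP => A; rewrite inE; apply/andP/imsetP.
    move=> [/eqP eA sub]; exists (A :\: S).
      rewrite inE; apply/andP; split.
        by apply/subsetP => i; rewrite !inE => /andP[].
      by rewrite cardsD (setIidPr sub) eA.
    apply/setP => i; rewrite !inE; case iS: (i \in S) => /=; rewrite ?orbT ?orbF //.
    by rewrite (subsetP sub i iS).
  move=> [B]; rewrite inE => /andP [sB /eqP cB] ->; split; last exact: subsetUr.
  rewrite cardsU.
  have -> : B :&: S = set0.
    apply/setP => i; rewrite !inE; apply/negbTE/andP => [[iB iS]].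
    by have := subsetP sB i iB; rewrite inE iS.
  by rewrite cards0 subn0 cB subnK.
rewrite card_in_imset.
  by rewrite cards_draws cardsCs setCK card_ord.
move=> B1 B2; rewrite !inE => /andP [s1 _] /andP [s2 _] e.
have d : forall B : {set 'I_n}, B \subset ~: S -> (B :|: S) :\: S = B.
  move=> B sB; apply/setP => i; rewrite !inE.
  case iS: (i \in S); rewrite /= ?orbF //.
  apply/esym/negbTE/negP => iB; by have := subsetP sB i iB; rewrite inE iS.
by rewrite -(d _ s1) e d.
Qed.

Lemma count_cube n (S : {set 'I_n}) k :
  (#|[set x : cube n | (hweight x == k) && (S \subset [set i | x i])]| * n ^_ #|S| =
   'C(n, k) * k ^_ #|S|)%N.
Proof.
rewrite -count_sets; congr (_ * _)%N.
have tinj : injective (fun x : cube n => [set i | x i]).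
  move=> x y e; apply/ffunP => i.
  by have := congr1 (fun A : {set 'I_n} => i \in A) e; rewrite /= !inE.
rewrite -(card_imset _ tinj); apply: eq_card => A.
apply/imsetP/idP.
  by move=> [x]; rewrite inE => hx ->; rewrite inE.
rewrite inE => hA; exists [ffun i => i \in A]; last first.
  by apply/setP => i; rewrite inE ffunE.
rewrite inE /hweight.
have e : [set i | [ffun i0 => i0 \in A] i] = A.
  by apply/setP => i; rewrite inE ffunE.
by rewrite (_ : [set i | _] = A).
Qed.

Definition supp n (m : 'X_{1..n}) : {set 'I_n} := [set i | (0 < m i)%N].

Lemma mono01 n (m : 'X_{1..n}) (x : cube n) :
  \prod_(i < n) ((x i)%:R : R) ^+ m i = ((supp m \subset [set i | x i]) : nat)%:R.
Proof.
case: (boolP (supp m \subset [set i | x i])) => h.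
  rewrite big1 // => i _.
  case: (posnP (m i)) => mi; first by rewrite mi expr0.
  have : i \in supp m by rewrite inE.
  by move/(subsetP h); rewrite inE => ->; rewrite expr1n.
have [i ism ix] := subsetPn h.
rewrite (bigD1 i) //=.
move: ism ix; rewrite !inE => mi /negbTE ->.
by rewrite expr0n /= -(prednK mi) /= mul0r.
Qed.

Lemma ffactR (k s : nat) : \prod_(j < s) ((k%:R : R) - j%:R) = (k ^_ s)%:R.
Proof.
elim: s => [|s IH]; first by rewrite big_ord0 ffactn0.
rewrite big_ord_recr /= IH ffactnSr.
case: (ltnP k s) => h; first by rewrite ffact_small // mul0r mul0n.
by rewrite natrM natrB.
Qed.

Lemma size_prodX s : (size (\prod_(j < s) ('X - (j%:R : R)%:P))%R <= s.+1)%N.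
Proof.
elim: s => [|s IH]; first by rewrite big_ord0 size_poly1.
rewrite big_ord_recr /=.
have h := size_polyMleq (\prod_(i < s) ('X - ((i%:R : R))%:P)) ('X - ((s%:R : R))%:P).
eapply leq_trans; first exact h.
by rewrite size_XsubC addn2 /=.
Qed.

Lemma card_supp_le n (m : 'X_{1..n}) : (#|supp m| <= mdeg m)%N.
Proof.
rewrite mdegE -sum1_card big_mkcond /=.
apply: leq_sum => i _; rewrite inE.
by case: (m i).
Qed.

Lemma card_supp_n n (m : 'X_{1..n}) : (#|supp m| <= n)%N.
Proof. by rewrite -[X in (_ <= X)%N]card_ord max_card. Qed.

Lemma symm n (P : {mpoly R[n]}) : exists Q : {poly R},
  (size Q <= msize P)%N /\
  forall k, Q.[k%:R] * ('C(n, k))%:R =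
            \sum_(x : cube n | hweight x == k) eval_cube P x.
Proof.
pose L (s : nat) : {poly R} := ((n ^_ s)%:R)^-1 *: \prod_(j < s) ('X - (j%:R : R)%:P).
exists (\sum_(m <- msupp P) P@_m *: L #|supp m|); split.
  rewrite big_seq.
  apply: (big_ind (fun q : {poly R} => (size q <= msize P)%N)).
  - by rewrite size_poly0.
  - move=> p q hp hq; apply: leq_trans (size_polyD _ _) _.
    by rewrite geq_max hp hq.
  move=> m hm.
  apply: leq_trans (size_scale_leq _ _) _.
  rewrite /L; apply: leq_trans (size_scale_leq _ _) _.
  apply: leq_trans (size_prodX _) _.
  apply: leq_trans (msize_mdeg_lt hm).
  by rewrite ltnS card_supp_le.
move=> k.
rewrite horner_sum big_distrl /=.
under [RHS]eq_bigr => x _ do rewrite /eval_cube mevalE.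
rewrite exchange_big /=.
apply: eq_bigr => m _.
rewrite -big_distrr /=.
rewrite hornerZ hornerZ horner_prod.
under eq_bigr => j _ do rewrite hornerXsubC.
rewrite ffactR -mulrA; congr (_ * _).
under eq_bigr => x _ do rewrite mono01.
rewrite -natr_sum.
have -> : (\sum_(x : cube n | hweight x == k) ((supp m \subset [set i | x i]) : nat))%N =
  #|[set x : cube n | (hweight x == k) && (supp m \subset [set i | x i])]|.
  rewrite -sum1dep_card big_mkcondr /=.
  by apply: eq_bigr => x _; case: (_ \subset _).
have hc := count_cube (supp m) k.
have hn : (n ^_ #|supp m|)%:R != 0 :> R.
  by rewrite pnatr_eq0 -lt0n ffact_gt0 card_supp_n.
apply: (mulIf hn).
rewrite -natrM hc natrM.
field.
exact: hn.
Qed.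

Lemma step_weight n (x y : cube n) : step x y -> hweight y = (hweight x).+1.
Proof.
move=> /existsP [i /and3P [xi yi /forallP H]].
rewrite /hweight.
have -> : [set j | y j] = i |: [set j | x j].
  apply/setP => j; rewrite !inE.
  case: (eqVneq j i) => [->|ne]; first by rewrite yi.
  by have := H j; rewrite ne /= => /eqP ->.
by rewrite cardsU1 inE xi.
Qed.

Lemma path_weight n (x0 : cube n) s : path (@step n) x0 s ->
  forall j, (j <= size s)%N -> hweight (nth x0 (x0 :: s) j) = (hweight x0 + j)%N.
Proof.
elim: s x0 => [|y s IH] x0 /=.
  by move=> _ j; rewrite leqn0 => /eqP ->; rewrite addn0.
move=> /andP [st p] [|j] hj /=; first by rewrite addn0.
rewrite (set_nth_default y) /=; last by rewrite ltnS.
by rewrite IH // (step_weight st) addSnnS.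
Qed.

Lemma card_weight n k :
  #|[set x : cube n | (hweight x == k) && (set0 \subset [set i | x i])]| = 'C(n, k).
Proof.
by have := count_cube (set0 : {set 'I_n}) k; rewrite cards0 !ffactn0 !muln1.
Qed.

Theorem lemma3p15 (n : nat) (f : boolfun n) :
  symmetric_fun f ->
  forall (p : {mpoly R[n]}), N_rep f p ->
  forall (x0 : cube n) (s : seq (cube n)), monotone_path_01 x0 s ->
  (alt_number f x0 s <= 2 * mpoly_deg p)%N.
Proof.
move=> sym p Np x0 s /and3P [/eqP e0 /eqP el ps].
have hw := path_weight ps.
have w0 : hweight x0 = 0%N.
  rewrite e0 /hweight (_ : [set i | zero_pt n i] = set0) ?cards0 //.
  by apply/setP => i; rewrite !inE ffunE.
have sz : size s = n.
  have := hw (size s) (leqnn _).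
  have -> : nth x0 (x0 :: s) (size s) = last x0 s.
    by have := nth_last x0 (x0 :: s).
  rewrite el w0 add0n /hweight (_ : [set i | one_pt n i] = setT).
    by rewrite cardsT card_ord.
  by apply/setP => i; rewrite !inE ffunE.
pose pt j := nth x0 (x0 :: s) j.
pose b j := f (pt j).
have -> : alt_number f x0 s = count (fun j => b j != b j.+1) (iota 0 (size s)).
  rewrite /alt_number.
  have -> : pairmap (fun x y => f x != f y) x0 s =
      map (fun j => f (pt j) != f (nth x0 s j)) (iota 0 (size s)).
    apply: (@eq_from_nth _ false); first by rewrite size_pairmap size_map size_iota.
    move=> i; rewrite size_pairmap => hi.
    by rewrite (nth_pairmap x0) // (nth_map 0%N) ?size_iota // nth_iota.
  by rewrite count_map.
rewrite sz.
have [Q [hQ hQe]] := symm (p * p).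
pose g := Q - ((2%:R : R)^-1)%:P.
have sq : forall e : R, e * e = `|e| * `|e|.
  by move=> e; rewrite -expr2 -real_normK ?num_real // expr2.
have key : forall j, (j <= n)%N -> if b j then 0 < g.[j%:R] else g.[j%:R] < 0.
  move=> j jn.
  have hC : 0 < ('C(n, j))%:R :> R by rewrite ltr0n bin_gt0.
  have hwj : hweight (pt j) = j by rewrite /pt hw ?w0 ?sz.
  have fx : forall x : cube n, hweight x == j -> f x = b j.
    by move=> x /eqP hx; apply: sym; rewrite hx hwj.
  have hcard : \sum_(x : cube n | hweight x == j) (1%:R : R) = ('C(n, j))%:R.
    rewrite -card_weight -sum1dep_card natr_sum.
    by apply: eq_bigl => x; rewrite sub0set andbT.
  have hQj := hQe j.
  rewrite /g hornerD hornerN hornerC.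
  case bj: (b j).
    have h1 : ('C(n, j))%:R <= Q.[j%:R] * ('C(n, j))%:R.
      rewrite hQj -hcard; apply: ler_sum => x hx.
      rewrite /eval_cube mevalM; have [_ h] := Np x.
      have := h (etrans (fx x hx) bj); rewrite -/(eval_cube p x) => hh.
      rewrite sq; nra.
    nra.
  have h1 : Q.[j%:R] * ('C(n, j))%:R <= (9%:R : R)^-1 * ('C(n, j))%:R.
    rewrite hQj -hcard mulr_sumr; apply: ler_sum => x hx.
    rewrite /eval_cube mevalM; have [h _] := Np x.
    have := h (etrans (fx x hx) bj); rewrite -/(eval_cube p x) => hh.
    rewrite sq mulr1.
    have := normr_ge0 (eval_cube p x); nra.
  nra.
have hc := sign_changes key.
apply: (leq_trans hc).
have hg : (size g <= maxn (msize (p * p)) 1)%N.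
  apply: (leq_trans (size_polyD _ _)).
  by rewrite size_polyN geq_max !leq_max hQ size_polyC_leq1 orbT.
rewrite /mpoly_deg.
have hm : ((msize (p * p)).-1 <= 2 * (msize p).-1)%N.
  have [p0|pn0] := eqVneq p 0; first by rewrite p0 mulr0 msize0.
  rewrite msizeM //.
  have : msize p != 0%N by rewrite msize_poly_eq0.
  move: (msize p) => a; lia.
move: hg hm; move: (size g) (msize (p * p)) (msize p) => a c d; lia.
Qed.
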